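(* Let $\mathcal{D}$ denote either the unit circle $S^1$ or the unit interval $[0,1]$, and let $c:\mathcal{D}\to\mathbb{R}^2$ be a smooth immersed plane curve with speed $\omega=|\dot c|>0$ and signed curvature $\kappa$. Let $\tilde c:=q(c)=\dot c/\sqrt{|\dot c|}$ be its square root velocity transform, and denote the speed of $\tilde c$ by $\tilde\omega=|\dot{\tilde c}|$. Then \[ \tilde{\omega}=\sqrt{\frac{\dot{\omega}^2}{4\omega}+\omega^3\kappa^2}. \] Moreover, $\tilde c$ is an immersion if and only if $\kappa$ and $\dot\omega$ have no common zeros. In this case, \[ \tilde{\kappa}\,\tilde{\omega}=\kappa\,\omega+\dot{\varphi}, \] where $\tilde\kappa$ denotes the signed curvature of $\tilde c$ and \[ \varphi:=\arctan\!\left(\frac{2\omega^2\kappa}{\dot{\omega}}\right). \]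
   Context: Dots denote derivatives with respect to the curve parameter $t\in\mathcal{D}$. For the plane curve $c$, $T=\dot c/\omega$ is the unit tangent, $N$ is the unit normal (obtained by rotating $T$ by $+\pi/2$), and the signed curvature $\kappa$ is defined by the Frenet equations $\dot T=\omega\kappa N$, $\dot N=-\omega\kappa T$; the signed curvature of $\tilde c$ is defined analogously. The square root velocity transform $\tilde c=\dot c/\sqrt{|\dot c|}$ is again a smooth curve in $\mathbb{R}^2$, but need not be an immersion. *)

(* Defs.v *)
From Stdlib Require Import Reals.
From Coquelicot Require Import Coquelicot.
Open Scope R_scope.

Definition cx (c : R -> R * R) (t : R) : R := fst (c t).
Definition cy (c : R -> R * R) (t : R) : R := snd (c t).

Definition smooth_fun (f : R -> R) : Prop := forall (n : nat) (x : R), ex_derive_n f n x.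
Definition smooth_curve (c : R -> R * R) : Prop := smooth_fun (cx c) /\ smooth_fun (cy c).

(* The parameter domain: the unit circle S^1 (realised as 1-periodic curves on R)
   or the unit interval [0,1]. *)
Inductive param_domain := Circle | Interval.

Definition in_dom (D : param_domain) (t : R) : Prop :=
  match D with Circle => True | Interval => 0 <= t <= 1 end.

(* A smooth curve c : D -> R^2 (for the interval: a smooth curve on R, viewed on [0,1]). *)
Definition curve_on (D : param_domain) (c : R -> R * R) : Prop :=
  smooth_curve c /\ (D = Circle -> forall t, c (t + 1) = c t).

Definition speed (c : R -> R * R) (t : R) : R :=
  sqrt (Derive (cx c) t ^ 2 + Derive (cy c) t ^ 2).

Definition immersion (D : param_domain) (c : R -> R * R) : Prop :=
  forall t, in_dom D t -> 0 < speed c t.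

Definition Tx (c : R -> R * R) (t : R) : R := Derive (cx c) t / speed c t.
Definition Ty (c : R -> R * R) (t : R) : R := Derive (cy c) t / speed c t.
Definition Nx (c : R -> R * R) (t : R) : R := - Ty c t.
Definition Ny (c : R -> R * R) (t : R) : R := Tx c t.

Definition signed_curvature (c : R -> R * R) (kappa : R -> R) : Prop :=
  forall t, 0 < speed c t ->
    Derive (Tx c) t = speed c t * kappa t * Nx c t /\
    Derive (Ty c) t = speed c t * kappa t * Ny c t /\
    Derive (Nx c) t = - (speed c t * kappa t * Tx c t) /\
    Derive (Ny c) t = - (speed c t * kappa t * Ty c t).

Definition srv (c : R -> R * R) (t : R) : R * R :=
  (Derive (cx c) t / sqrt (speed c t), Derive (cy c) t / sqrt (speed c t)).

(* Where omega' = 0 (so kappa <> 0 under the hypothesis) the quotient is undefined;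
   there phi is understood as its continuous branch, locally
   +-pi/2 - arctan (omega' / (2 omega^2 kappa)), whose derivative is used. *)
Definition phi_num (c : R -> R * R) (kappa : R -> R) (s : R) : R :=
  2 * speed c s ^ 2 * kappa s.
Definition phi_den (c : R -> R * R) (s : R) : R := Derive (speed c) s.

Definition phi (c : R -> R * R) (kappa : R -> R) (s : R) : R :=
  atan (phi_num c kappa s / phi_den c s).

Definition phi_dot (c : R -> R * R) (kappa : R -> R) (t : R) : R :=
  match Req_EM_T (phi_den c t) 0 with
  | right _ => Derive (phi c kappa) t
  | left _ => - Derive (fun s => atan (phi_den c s / phi_num c kappa s)) t
  end.

(* Main.v *)
Require Import Defs.
From Stdlib Require Import Reals Lra.
From Coquelicot Require Import Coquelicot.
Open Scope R_scope.

Lemma isd_mult (f g : R -> R) x df dg : is_derive f x df -> is_derive g x dg ->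
  is_derive (fun u => f u * g u) x (df * g x + f x * dg).
Proof. intros Hf Hg. exact (is_derive_mult f g x df dg Hf Hg (fun n m => Rmult_comm n m)). Qed.

Lemma isd_plus (f g : R -> R) x df dg : is_derive f x df -> is_derive g x dg ->
  is_derive (fun u => f u + g u) x (df + dg).
Proof. intros Hf Hg. exact (is_derive_plus f g x df dg Hf Hg). Qed.

Lemma isd_opp (f : R -> R) x df : is_derive f x df ->
  is_derive (fun u => - f u) x (- df).
Proof. intros Hf. exact (is_derive_opp f x df Hf). Qed.

Lemma isd_const (a : R) x : is_derive (fun _ => a) x 0.
Proof. exact (is_derive_const a x). Qed.

Lemma DC (f : R -> R) x : ex_derive f x -> is_derive f x (Derive f x).
Proof. apply Derive_correct. Qed.

Lemma cont_pos (f : R -> R) s : ex_derive f s -> 0 < f s -> locally s (fun u => 0 < f u).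
Proof. intros Hd Hp. apply ex_derive_continuous in Hd. apply Hd. apply (open_gt 0 (f s) Hp). Qed.

Lemma cont_neq (f : R -> R) s : ex_derive f s -> f s <> 0 -> locally s (fun u => f u <> 0).
Proof. intros Hd Hp. apply ex_derive_continuous in Hd. exact (Hd _ (open_neq 0 (f s) Hp)). Qed.

Definition isopen (U : R -> Prop) := forall s, U s -> locally s U.
Definition C2 (U : R -> Prop) (f : R -> R) :=
  forall s, U s -> ex_derive f s /\ ex_derive (Derive f) s.

Lemma loc_U U s (P : R -> Prop) : isopen U -> U s -> (forall y, U y -> P y) -> locally s P.
Proof. intros HU Hs HP. eapply filter_imp; [exact HP| exact (HU s Hs)]. Qed.

Lemma exd_on U (f g : R -> R) s : isopen U -> U s -> (forall y, U y -> f y = g y) ->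
  ex_derive g s -> ex_derive f s.
Proof.
  intros HU Hs He Hg. apply (ex_derive_ext_loc g f); auto.
  apply (loc_U U); auto. intros; symmetry; auto.
Qed.

Lemma isd_on U (f g : R -> R) s l : isopen U -> U s -> (forall y, U y -> f y = g y) ->
  is_derive g s l -> Derive f s = l.
Proof.
  intros HU Hs He Hg. apply is_derive_unique. apply (is_derive_ext_loc g f); auto.
  apply (loc_U U); auto. intros; symmetry; auto.
Qed.

Lemma Derive_on U (f g : R -> R) y : isopen U -> U y -> (forall y, U y -> f y = g y) ->
  Derive f y = Derive g y.
Proof. intros HU Hs He. apply Derive_ext_loc. apply (loc_U U); auto. Qed.

Lemma C2_ext U f g : isopen U -> (forall y, U y -> f y = g y) -> C2 U f -> C2 U g.
Proof.
  intros HU He Hf s Hs. destruct (Hf s Hs) as [H1 H2]. split.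
  - apply (exd_on U g f); auto. intros; symmetry; auto.
  - apply (exd_on U (Derive g) (Derive f)); auto.
    intros y Hy. symmetry. apply (Derive_on U); auto.
Qed.

Lemma C2_mult U f g : isopen U -> C2 U f -> C2 U g -> C2 U (fun u => f u * g u).
Proof.
  intros HU Hf Hg s Hs. destruct (Hf s Hs) as [F1 F2]; destruct (Hg s Hs) as [G1 G2].
  split. { eexists. apply isd_mult; apply DC; auto. }
  apply (exd_on U _ (fun u => Derive f u * g u + f u * Derive g u)); auto.
  - intros y Hy. apply is_derive_unique. apply isd_mult; apply DC; [apply Hf|apply Hg]; auto.
  - eexists. apply isd_plus; apply isd_mult; apply DC; auto.
Qed.

Lemma C2_plus U f g : isopen U -> C2 U f -> C2 U g -> C2 U (fun u => f u + g u).
Proof.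
  intros HU Hf Hg s Hs. destruct (Hf s Hs) as [F1 F2]; destruct (Hg s Hs) as [G1 G2].
  split. { eexists. apply isd_plus; apply DC; auto. }
  apply (exd_on U _ (fun u => Derive f u + Derive g u)); auto.
  - intros y Hy. apply is_derive_unique. apply isd_plus; apply DC; [apply Hf|apply Hg]; auto.
  - eexists. apply isd_plus; apply DC; auto.
Qed.

Lemma C2_opp U f : isopen U -> C2 U f -> C2 U (fun u => - f u).
Proof.
  intros HU Hf s Hs. destruct (Hf s Hs) as [F1 F2].
  split. { eexists. apply isd_opp; apply DC; auto. }
  apply (exd_on U _ (fun u => - Derive f u)); auto.
  - intros y Hy. apply is_derive_unique. apply isd_opp; apply DC; apply Hf; auto.
  - eexists. apply isd_opp; apply DC; auto.
Qed.

Lemma C2_const U a : isopen U -> C2 U (fun _ => a).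
Proof.
  intros HU s Hs. split. { eexists; apply isd_const. }
  apply (exd_on U _ (fun _ => 0)); auto.
  - intros y Hy. apply is_derive_unique. apply isd_const.
  - eexists; apply isd_const.
Qed.

Lemma C2_inv U f : isopen U -> (forall y, U y -> f y <> 0) -> C2 U f -> C2 U (fun u => / f u).
Proof.
  intros HU Hn Hf s Hs. destruct (Hf s Hs) as [F1 F2].
  split. { eexists. apply is_derive_inv; [apply DC|]; auto. }
  apply (exd_on U _ (fun u => - Derive f u / f u ^ 2)); auto.
  - intros y Hy. apply is_derive_unique. apply is_derive_inv; [apply DC; apply Hf|]; auto.
  - eexists. apply is_derive_div. apply isd_opp; apply DC; auto.
    apply is_derive_pow. apply DC; auto. apply pow_nonzero; auto.
Qed.

Lemma C2_sqrt U f : isopen U -> (forall y, U y -> 0 < f y) -> C2 U f -> C2 U (fun u => sqrt (f u)).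
Proof.
  intros HU Hn Hf s Hs. destruct (Hf s Hs) as [F1 F2].
  split. { eexists. apply is_derive_sqrt; [apply DC|]; auto. }
  apply (exd_on U _ (fun u => Derive f u / (2 * sqrt (f u)))); auto.
  - intros y Hy. apply is_derive_unique. apply is_derive_sqrt; [apply DC; apply Hf|]; auto.
  - eexists. apply is_derive_div. apply DC; auto.
    apply is_derive_scal. apply is_derive_sqrt; [apply DC|]; auto.
    apply Rgt_not_eq. apply Rmult_lt_0_compat; [lra|]. apply sqrt_lt_R0; auto.
Qed.

Lemma alg (a b da db tx ty w k s kt : R) :
  0 < s -> s * s = a * a + b * b -> tx * tx + ty * ty = 1 ->
  s * kt * - ((a * ty + b * tx) / s) = ((da * tx + a * (w * k * - ty) + (db * - ty + b * - (w * k * tx))) * s - (a * tx + b * - ty) * ((da * a + a * da + (db * b + b * db)) / (2 * s))) / s ^ 2 ->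
  s * kt * ((a * tx + b * - ty) / s) = ((da * ty + a * (w * k * tx) + (db * tx + b * - (w * k * ty))) * s - (a * ty + b * tx) * ((da * a + a * da + (db * b + b * db)) / (2 * s))) / s ^ 2 ->
  kt * s = k * w + (a * db - b * da) / (a * a + b * b).
Proof.
  intros Hs Hss T1 E1 E2.
  set (P := a * tx + b * - ty) in *. set (Q := a * ty + b * tx) in *.
  set (dP := da * tx + a * (w * k * - ty) + (db * - ty + b * - (w * k * tx))) in *.
  set (dQ := da * ty + a * (w * k * tx) + (db * tx + b * - (w * k * ty))) in *.
  set (ds := (da * a + a * da + (db * b + b * db)) / (2 * s)) in *.
  assert (E : P * (s * kt * (P / s)) - Q * (s * kt * - (Q / s)) = P * ((dQ * s - Q * ds) / s ^ 2) - Q * ((dP * s - P * ds) / s ^ 2)) by (rewrite E1, E2; ring).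
  assert (L : P * (s * kt * (P / s)) - Q * (s * kt * - (Q / s)) = kt * (s * s)).
  { replace (P * (s * kt * (P / s)) - Q * (s * kt * - (Q / s))) with (kt * (P * P + Q * Q)) by (field; lra).
    replace (P * P + Q * Q) with ((a * a + b * b) * (tx * tx + ty * ty)) by (unfold P, Q; ring).
    rewrite T1, Hss. ring. }
  assert (Rr : P * ((dQ * s - Q * ds) / s ^ 2) - Q * ((dP * s - P * ds) / s ^ 2) = ((a * a + b * b) * w * k + (a * db - b * da)) / s).
  { replace (P * ((dQ * s - Q * ds) / s ^ 2) - Q * ((dP * s - P * ds) / s ^ 2)) with ((P * dQ - Q * dP) / s) by (field; lra).
    replace (P * dQ - Q * dP) with (((a * a + b * b) * w * k + (a * db - b * da)) * (tx * tx + ty * ty)) by (unfold P, Q, dP, dQ; ring).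
    rewrite T1. field. lra. }
  rewrite L, Rr in E. rewrite <- Hss in E |- *.
  assert (K : kt * s = (kt * (s * s)) / s) by (field; lra).
  rewrite K, E. field. lra.
Qed.


Lemma sqrt_pos_inv x : 0 < sqrt x -> 0 < x.
Proof. intros H. apply sqrt_lt_0_alt. rewrite sqrt_0. exact H. Qed.

Definition Uc (c : R -> R * R) s := 0 < speed c s.

Lemma speed_sq c y : speed c y * speed c y = Derive (cx c) y ^ 2 + Derive (cy c) y ^ 2.
Proof. unfold speed. apply sqrt_sqrt. nra. Qed.

Lemma Uc_open c : smooth_curve c -> isopen (Uc c).
Proof.
  intros [Hx Hy] s Hs. unfold Uc, speed in *.
  apply sqrt_pos_inv in Hs.
  assert (Hd : ex_derive (fun t => Derive (cx c) t ^ 2 + Derive (cy c) t ^ 2) s).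
  { eexists. apply isd_plus; apply is_derive_pow; apply DC; [exact (Hx 2%nat s)|exact (Hy 2%nat s)]. }
  eapply filter_imp; [|exact (cont_pos _ s Hd Hs)].
  intros u Hu. simpl in Hu. apply sqrt_lt_R0. exact Hu.
Qed.

Lemma x1_C2 c U : smooth_curve c -> C2 U (Derive (cx c)).
Proof. intros [Hx Hy] s _. split; [exact (Hx 2%nat s)|exact (Hx 3%nat s)]. Qed.
Lemma y1_C2 c U : smooth_curve c -> C2 U (Derive (cy c)).
Proof. intros [Hx Hy] s _. split; [exact (Hy 2%nat s)|exact (Hy 3%nat s)]. Qed.

Lemma speed_C2 c : smooth_curve c -> C2 (Uc c) (speed c).
Proof.
  intros Hs. pose proof (Uc_open c Hs) as HU.
  apply (C2_ext _ (fun u => sqrt (Derive (cx c) u * Derive (cx c) u + Derive (cy c) u * Derive (cy c) u))); auto.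
  { intros y _. unfold speed. f_equal. ring. }
  apply C2_sqrt; auto.
  { intros y Hy. unfold Uc, speed in Hy. apply sqrt_pos_inv in Hy. nra. }
  apply C2_plus; [exact HU| |]; apply C2_mult; try exact HU.
  apply x1_C2; exact Hs. apply x1_C2; exact Hs. apply y1_C2; exact Hs. apply y1_C2; exact Hs.
Qed.

Lemma Tx_C2 c : smooth_curve c -> C2 (Uc c) (Tx c).
Proof.
  intros Hs. pose proof (Uc_open c Hs) as HU.
  apply (C2_ext _ (fun u => Derive (cx c) u * / speed c u)); auto.
  apply C2_mult; auto. apply x1_C2; auto. apply C2_inv; auto.
  intros y Hy; unfold Uc in Hy; lra. apply speed_C2; auto.
Qed.
Lemma Ty_C2 c : smooth_curve c -> C2 (Uc c) (Ty c).
Proof.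
  intros Hs. pose proof (Uc_open c Hs) as HU.
  apply (C2_ext _ (fun u => Derive (cy c) u * / speed c u)); auto.
  apply C2_mult; auto. apply y1_C2; auto. apply C2_inv; auto.
  intros y Hy; unfold Uc in Hy; lra. apply speed_C2; auto.
Qed.
Lemma Nx_C2 c : smooth_curve c -> C2 (Uc c) (Nx c).
Proof.
  intros Hs. pose proof (Uc_open c Hs) as HU.
  apply (C2_ext _ (fun u => - Ty c u)); auto. apply C2_opp; auto. apply Ty_C2; auto.
Qed.

Definition rr c s := sqrt (speed c s).
Lemma rr_C2 c : smooth_curve c -> C2 (Uc c) (rr c).
Proof.
  intros Hs. pose proof (Uc_open c Hs) as HU.
  apply C2_sqrt; auto. apply speed_C2; auto.
Qed.

Lemma TT1 c y : 0 < speed c y -> Tx c y * Tx c y + Ty c y * Ty c y = 1.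
Proof.
  intros H. unfold Tx, Ty. pose proof (speed_sq c y) as E.
  field_simplify; [|lra]. rewrite <- E. field. lra.
Qed.

Lemma kappa_eq c kappa y : signed_curvature c kappa -> 0 < speed c y ->
  kappa y = (Tx c y * Derive (Ty c) y - Ty c y * Derive (Tx c) y) / speed c y.
Proof.
  intros Hk H. destruct (Hk y H) as [E1 [E2 _]]. rewrite E1, E2.
  unfold Nx, Ny. pose proof (TT1 c y H) as T1.
  match goal with |- _ = ?e => replace e with (kappa y * (Tx c y * Tx c y + Ty c y * Ty c y)) by (field; lra) end.
  rewrite T1; ring.
Qed.

Lemma kappa_exd c kappa y : smooth_curve c -> signed_curvature c kappa -> 0 < speed c y ->
  ex_derive kappa y.
Proof.
  intros Hs Hk H. pose proof (Uc_open c Hs) as HU.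
  apply (exd_on (Uc c) kappa (fun y => (Tx c y * Derive (Ty c) y - Ty c y * Derive (Tx c) y) / speed c y)); auto.
  { intros z Hz. apply kappa_eq; auto. }
  destruct (Tx_C2 c Hs y H), (Ty_C2 c Hs y H), (speed_C2 c Hs y H).
  eexists. apply is_derive_div; [|apply DC; auto|lra].
  apply isd_plus; [apply isd_mult; apply DC; auto|].
  apply isd_opp. apply isd_mult; apply DC; auto.
Qed.


Definition AA c := Derive (rr c).
Definition BB c (kappa : R -> R) s := rr c s * speed c s * kappa s.

Lemma isd_eq (f : R -> R) (x l l' : R) : is_derive f x l -> l = l' -> is_derive f x l'.
Proof. intros H ->; exact H. Qed.

Lemma rr_sq c y : Uc c y -> rr c y * rr c y = speed c y.
Proof. intros H. unfold rr. apply sqrt_sqrt. unfold Uc in H. lra. Qed.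
Lemma rr_pos c y : Uc c y -> 0 < rr c y.
Proof. intros H. unfold rr. apply sqrt_lt_R0. exact H. Qed.

Lemma L1 c y : smooth_curve c -> Uc c y -> AA c y = Derive (speed c) y / (2 * rr c y).
Proof.
  intros Hs H. unfold AA. apply is_derive_unique. unfold rr.
  apply is_derive_sqrt; [apply DC; apply (proj1 (speed_C2 c Hs y H))|exact H].
Qed.

Lemma L2 c kappa y : smooth_curve c -> signed_curvature c kappa -> Uc c y ->
  Derive (cx (srv c)) y = AA c y * Tx c y + BB c kappa y * Nx c y.
Proof.
  intros Hs Hk H. pose proof (Uc_open c Hs) as HU.
  apply (isd_on (Uc c) _ (fun s => rr c s * Tx c s)); auto.
  - intros z Hz. change (cx (srv c) z) with (Derive (cx c) z / sqrt (speed c z)).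
    unfold Tx. pose proof (rr_sq c z Hz) as E. pose proof (rr_pos c z Hz) as P.
    unfold rr in *. set (q := sqrt (speed c z)) in *. rewrite <- E. field. lra.
  - eapply isd_eq. apply isd_mult; apply DC; [apply (proj1 (rr_C2 c Hs y H))|apply (proj1 (Tx_C2 c Hs y H))].
    destruct (Hk y H) as [E1 _]. rewrite E1. unfold AA, BB. ring.
Qed.

Lemma L3 c kappa y : smooth_curve c -> signed_curvature c kappa -> Uc c y ->
  Derive (cy (srv c)) y = AA c y * Ty c y + BB c kappa y * Ny c y.
Proof.
  intros Hs Hk H. pose proof (Uc_open c Hs) as HU.
  apply (isd_on (Uc c) _ (fun s => rr c s * Ty c s)); auto.
  - intros z Hz. change (cy (srv c) z) with (Derive (cy c) z / sqrt (speed c z)).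
    unfold Ty. pose proof (rr_sq c z Hz) as E. pose proof (rr_pos c z Hz) as P.
    unfold rr in *. set (q := sqrt (speed c z)) in *. rewrite <- E. field. lra.
  - eapply isd_eq. apply isd_mult; apply DC; [apply (proj1 (rr_C2 c Hs y H))|apply (proj1 (Ty_C2 c Hs y H))].
    destruct (Hk y H) as [_ [E2 _]]. rewrite E2. unfold AA, BB. ring.
Qed.

Lemma L4 c kappa y : smooth_curve c -> signed_curvature c kappa -> Uc c y ->
  speed (srv c) y = sqrt (AA c y * AA c y + BB c kappa y * BB c kappa y).
Proof.
  intros Hs Hk H.
  change (speed (srv c) y) with (sqrt (Derive (cx (srv c)) y ^ 2 + Derive (cy (srv c)) y ^ 2)).
  rewrite (L2 c kappa y Hs Hk H), (L3 c kappa y Hs Hk H). f_equal.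
  pose proof (TT1 c y H) as T. unfold Nx, Ny.
  replace ((AA c y * Tx c y + BB c kappa y * - Ty c y) ^ 2 + (AA c y * Ty c y + BB c kappa y * Tx c y) ^ 2)
    with ((AA c y * AA c y + BB c kappa y * BB c kappa y) * (Tx c y * Tx c y + Ty c y * Ty c y)) by ring.
  rewrite T. ring.
Qed.

Lemma L5 c kappa y : smooth_curve c -> Uc c y ->
  AA c y * AA c y + BB c kappa y * BB c kappa y =
  Derive (speed c) y ^ 2 / (4 * speed c y) + speed c y ^ 3 * kappa y ^ 2.
Proof.
  intros Hs H. rewrite (L1 c y Hs H). unfold BB.
  pose proof (rr_sq c y H) as E. pose proof (rr_pos c y H) as P.
  rewrite <- E. field. lra.
Qed.

Lemma L6 c kappa y : smooth_curve c -> Uc c y ->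
  (AA c y = 0 /\ BB c kappa y = 0 <-> kappa y = 0 /\ Derive (speed c) y = 0).
Proof.
  intros Hs H. rewrite (L1 c y Hs H). unfold BB.
  pose proof (rr_pos c y H) as P. unfold Uc in H.
  split; intros [E1 E2].
  - split.
    + destruct (Rmult_integral _ _ E2) as [E|E]; auto.
      destruct (Rmult_integral _ _ E) as [E'|E']; lra.
    + unfold Rdiv in E1. destruct (Rmult_integral _ _ E1) as [E|E]; auto.
      exfalso. revert E. apply Rinv_neq_0_compat. lra.
  - rewrite E1, E2. split; [unfold Rdiv|]; ring.
Qed.

Lemma sumsq_pos a b : 0 < a * a + b * b <-> ~ (a = 0 /\ b = 0).
Proof.
  split.
  - intros H [-> ->]. lra.
  - intros H. destruct (Req_dec a 0) as [->|Ha].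
    + assert (b <> 0) by tauto. assert (0 < b * b) by (apply Rsqr_pos_lt; auto). lra.
    + assert (0 < a * a) by (apply Rsqr_pos_lt; auto). nra.
Qed.


Lemma isd_atan (f : R -> R) (x df : R) : is_derive f x df ->
  is_derive (fun y => atan (f y)) x (df / (1 + f x ^ 2)).
Proof.
  intros H. eapply isd_eq; [apply (is_derive_comp atan f); [apply is_derive_atan|exact H]|].
  change (df * / (1 + Rsqr (f x)) = df / (1 + f x ^ 2)). unfold Rsqr, Rdiv.
  replace (f x ^ 2) with (f x * f x) by ring. reflexivity.
Qed.

Lemma ratio1 c kappa y : smooth_curve c -> Uc c y ->
  phi_num c kappa y / phi_den c y = BB c kappa y / AA c y.
Proof.
  intros Hs H. unfold phi_num, phi_den, BB. rewrite (L1 c y Hs H).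
  pose proof (rr_sq c y H) as E. pose proof (rr_pos c y H) as P.
  destruct (Req_dec (Derive (speed c) y) 0) as [D|D].
  - rewrite D. unfold Rdiv. rewrite !Rmult_0_l, !Rinv_0. ring.
  - rewrite <- E. field. lra.
Qed.

Lemma ratio2 c kappa y : smooth_curve c -> Uc c y ->
  phi_den c y / phi_num c kappa y = AA c y / BB c kappa y.
Proof.
  intros Hs H. unfold phi_num, phi_den, BB. rewrite (L1 c y Hs H).
  pose proof (rr_sq c y H) as E. pose proof (rr_pos c y H) as P.
  destruct (Req_dec (kappa y) 0) as [D|D].
  - rewrite D. unfold Rdiv. rewrite !Rmult_0_r, !Rinv_0. ring.
  - rewrite <- E. field. lra.
Qed.

Lemma PD c kappa t : smooth_curve c -> signed_curvature c kappa -> Uc c t ->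
  ~ (kappa t = 0 /\ Derive (speed c) t = 0) ->
  phi_dot c kappa t = (AA c t * Derive (BB c kappa) t - BB c kappa t * Derive (AA c) t)
                      / (AA c t * AA c t + BB c kappa t * BB c kappa t).
Proof.
  intros Hs Hk H Hnz. pose proof (Uc_open c Hs) as HU.
  assert (HX : 0 < AA c t * AA c t + BB c kappa t * BB c kappa t).
  { apply sumsq_pos. rewrite (L6 c kappa t Hs H). exact Hnz. }
  pose proof (DC _ _ (proj2 (rr_C2 c Hs t H))) as dA. fold (AA c) in dA.
  assert (dB : is_derive (BB c kappa) t (Derive (BB c kappa) t)).
  { apply DC. eexists. unfold BB.
    apply isd_mult; [apply isd_mult|]; apply DC.
    apply (proj1 (rr_C2 c Hs t H)). apply (proj1 (speed_C2 c Hs t H)). apply (kappa_exd c kappa t Hs Hk H). }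
  pose proof (rr_pos c t H) as P. pose proof (rr_sq c t H) as E.
  unfold phi_dot. destruct (Req_EM_T (phi_den c t) 0) as [D|D].
  - assert (K : kappa t <> 0). { intros K. apply Hnz. split; auto. }
    assert (Bn : BB c kappa t <> 0).
    { unfold BB. unfold Uc in H. apply Rmult_integral_contrapositive_currified; auto.
      apply Rmult_integral_contrapositive_currified; lra. }
    rewrite (isd_on (Uc c) _ (fun s => atan (AA c s / BB c kappa s)) t
       (- ((AA c t * Derive (BB c kappa) t - BB c kappa t * Derive (AA c) t)
                      / (AA c t * AA c t + BB c kappa t * BB c kappa t))) HU H).
    { field. lra. }
    { intros y Hy. rewrite (ratio2 c kappa y Hs Hy). reflexivity. }
    eapply isd_eq. apply isd_atan. apply is_derive_div; eauto.
    cbv beta. field. split; auto. nra.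
  - assert (An : AA c t <> 0).
    { rewrite (L1 c t Hs H). unfold phi_den in D. unfold Rdiv. apply Rmult_integral_contrapositive_currified; auto.
      apply Rinv_neq_0_compat. lra. }
    apply (isd_on (Uc c) _ (fun s => atan (BB c kappa s / AA c s)) t _ HU H).
    { intros y Hy. unfold phi. rewrite (ratio1 c kappa y Hs Hy). reflexivity. }
    eapply isd_eq. apply isd_atan. apply is_derive_div; eauto.
    cbv beta. field. split; auto. nra.
Qed.


Lemma BB_exd c kappa y : smooth_curve c -> signed_curvature c kappa -> Uc c y -> ex_derive (BB c kappa) y.
Proof.
  intros Hs Hk H. eexists. unfold BB.
  apply isd_mult; [apply isd_mult|]; apply DC.
  apply (proj1 (rr_C2 c Hs y H)). apply (proj1 (speed_C2 c Hs y H)). apply (kappa_exd c kappa y Hs Hk H).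
Qed.

Lemma AA_exd c y : smooth_curve c -> Uc c y -> ex_derive (AA c) y.
Proof. intros Hs H. exact (proj2 (rr_C2 c Hs y H)). Qed.

Lemma P3 c kappa t kt : smooth_curve c -> signed_curvature c kappa -> Uc c t ->
  ~ (kappa t = 0 /\ Derive (speed c) t = 0) -> signed_curvature (srv c) kt ->
  kt t * speed (srv c) t = kappa t * speed c t + phi_dot c kappa t.
Proof.
  intros Hs Hk H Hnz Hkt. pose proof (Uc_open c Hs) as HU.
  assert (HX : 0 < AA c t * AA c t + BB c kappa t * BB c kappa t).
  { apply sumsq_pos. rewrite (L6 c kappa t Hs H). exact Hnz. }
  assert (HS : 0 < sqrt (AA c t * AA c t + BB c kappa t * BB c kappa t)) by (apply sqrt_lt_R0; exact HX).
  pose proof (DC _ _ (AA_exd c t Hs H)) as dA.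
  pose proof (DC _ _ (BB_exd c kappa t Hs Hk H)) as dB.
  pose proof (DC _ _ (proj1 (Tx_C2 c Hs t H))) as dTx.
  pose proof (DC _ _ (proj1 (Ty_C2 c Hs t H))) as dTy.
  pose proof (DC _ _ (proj1 (Nx_C2 c Hs t H))) as dNx.
  assert (dNy : is_derive (Ny c) t (Derive (Ny c) t)) by (apply DC; exact (proj1 (Tx_C2 c Hs t H))).
  pose proof (isd_plus _ _ t _ _ (isd_mult _ _ t _ _ dA dTx) (isd_mult _ _ t _ _ dB dNx)) as dP.
  pose proof (isd_plus _ _ t _ _ (isd_mult _ _ t _ _ dA dTy) (isd_mult _ _ t _ _ dB dNy)) as dQ.
  pose proof (isd_plus _ _ t _ _ (isd_mult _ _ t _ _ dA dA) (isd_mult _ _ t _ _ dB dB)) as dX.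
  pose proof (is_derive_sqrt _ t _ dX HX) as dS.
  pose proof (is_derive_div _ _ t _ _ dP dS (Rgt_not_eq _ _ HS)) as dT1.
  pose proof (is_derive_div _ _ t _ _ dQ dS (Rgt_not_eq _ _ HS)) as dT2.
  apply (is_derive_ext_loc _ (Tx (srv c))) in dT1.
  2:{ apply (loc_U (Uc c)); auto. intros y Hy.
      change (Tx (srv c) y) with (Derive (cx (srv c)) y / speed (srv c) y).
      rewrite (L2 c kappa y Hs Hk Hy), (L4 c kappa y Hs Hk Hy). reflexivity. }
  apply (is_derive_ext_loc _ (Ty (srv c))) in dT2.
  2:{ apply (loc_U (Uc c)); auto. intros y Hy.
      change (Ty (srv c) y) with (Derive (cy (srv c)) y / speed (srv c) y).
      rewrite (L3 c kappa y Hs Hk Hy), (L4 c kappa y Hs Hk Hy). reflexivity. }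
  apply is_derive_unique in dT1. apply is_derive_unique in dT2.
  assert (HSt : 0 < speed (srv c) t) by (rewrite (L4 c kappa t Hs Hk H); exact HS).
  destruct (Hkt t HSt) as [F1 [F2 _]].
  destruct (Hk t H) as [G1 [G2 [G3 G4]]].
  unfold Nx at 1 in F1. unfold Ny at 1 in F2.
  change (Ty (srv c) t) with (Derive (cy (srv c)) t / speed (srv c) t) in F1.
  change (Tx (srv c) t) with (Derive (cx (srv c)) t / speed (srv c) t) in F2.
  rewrite (L3 c kappa t Hs Hk H) in F1. rewrite (L2 c kappa t Hs Hk H) in F2.
  rewrite (L4 c kappa t Hs Hk H) in F1, F2 |- *.
  rewrite F1 in dT1. rewrite F2 in dT2. rewrite G1, G3 in dT1. rewrite G2, G4 in dT2.
  pose proof (TT1 c t H) as T1.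
  rewrite (PD c kappa t Hs Hk H Hnz).
  unfold Nx, Ny in dT1, dT2.
  apply (alg _ _ _ _ _ _ _ _ _ _ HS (sqrt_sqrt _ (Rlt_le _ _ HX)) T1 dT1 dT2).
Qed.


Theorem proposition1 (D : param_domain) (c : R -> R * R) (kappa : R -> R) :
  curve_on D c ->
  immersion D c ->
  signed_curvature c kappa ->
  (forall t, in_dom D t ->
     speed (srv c) t =
     sqrt (Derive (speed c) t ^ 2 / (4 * speed c t) + speed c t ^ 3 * kappa t ^ 2)) /\
  (immersion D (srv c) <->
     (forall t, in_dom D t -> ~ (kappa t = 0 /\ Derive (speed c) t = 0))) /\
  ((forall t, in_dom D t -> ~ (kappa t = 0 /\ Derive (speed c) t = 0)) ->
     forall kappa_t : R -> R, signed_curvature (srv c) kappa_t ->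
     forall t, in_dom D t ->
       kappa_t t * speed (srv c) t = kappa t * speed c t + phi_dot c kappa t).
Proof.
  intros [Hs _] Himm Hk.
  split; [|split].
  - intros t Ht. rewrite (L4 c kappa t Hs Hk (Himm t Ht)). f_equal. apply L5; [exact Hs|exact (Himm t Ht)].
  - split.
    + intros Hi t Ht. pose proof (Hi t Ht) as P.
      rewrite (L4 c kappa t Hs Hk (Himm t Ht)) in P. apply sqrt_pos_inv in P.
      apply sumsq_pos in P. rewrite (L6 c kappa t Hs (Himm t Ht)) in P. exact P.
    + intros Hn t Ht. rewrite (L4 c kappa t Hs Hk (Himm t Ht)). apply sqrt_lt_R0.
      apply sumsq_pos. rewrite (L6 c kappa t Hs (Himm t Ht)). auto.
  - intros Hn kt Hkt t Ht. apply P3; auto. apply Himm; auto.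
Qed.
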